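(* For every virtual knot $K$ there exists a positive integer $n$ such that $K$ can be represented on a $1\times n$ virtual rectangular mosaic (a row mosaic).
   Context: Mosaic tiles are the eleven standard unit-square tiles $T_0,\dots,T_{10}$: $T_0$ is blank; $T_1,\dots,T_4$ each contain a single arc joining the midpoints of two adjacent sides; $T_5$ (horizontal) and $T_6$ (vertical) each contain a single straight segment joining midpoints of opposite sides; $T_7,T_8$ each contain two disjoint arcs, each joining midpoints of two adjacent sides; $T_9,T_{10}$ are the two crossing tiles, containing a horizontal and a vertical segment crossing at the center, with the vertical strand over in one and the horizontal strand over in the other. A virtual rectangular mosaic is an $m\times n$ array of such tiles together with a pairing (with orientation) of the $2(m+n)$ boundary unit edges of the array such that the quotient (''closure'') is a closed orientable surface $\Sigma_D$ carrying a knot or link diagram $D$; this represents a virtual knot/link (a knot diagram on a closed orientable surface up to stable equivalence; equivalently, a virtual knot diagram up to generalized Reidemeister moves, with interlocking boundary edge pairs giving virtual crossings). A row mosaic is a $1\times n$ virtual rectangular mosaic. *)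

(* Defs.v *)
From HB Require Import structures.
From mathcomp Require Import all_boot.
From Stdlib Require Import Relations.
Set Implicit Arguments. Unset Strict Implicit. Unset Printing Implicit Defensive.

(* Virtual knots as signed Gauss diagrams (Goussarov-Polyak-Viro / Kauffman) *)

(* An entry (l, o, s): passage through crossing l, over iff o, crossing sign
   positive iff s.  A Gauss code lists the passages along the knot, read
   cyclically from some base point. *)
Definition gentry := (nat * bool * bool)%type.
Definition gcode := seq gentry.

Definition glabel (e : gentry) : nat := e.1.1.

Definition gwf (c : gcode) : Prop :=
  forall e, e \in c ->
    count (fun f => glabel f == glabel e) c = 2 /\ (e.1.1, ~~ e.1.2, e.2) \in c.

Definition r3T (t u : nat) (st su : bool) (oT : bool) : gcode :=
  let q := [:: (t, true, st); (u, true, su)] in if oT then q else rev q.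
Definition r3M (t v : nat) (st sv : bool) (oM : bool) : gcode :=
  let q := [:: (t, false, st); (v, true, sv)] in if oM then q else rev q.
Definition r3B (u v : nat) (su sv : bool) (oB : bool) : gcode :=
  let q := [:: (u, false, su); (v, false, sv)] in if oB then q else rev q.

(* Elementary moves on Gauss codes: change of base point, relabelling of
   crossings, and the (all-variant) Reidemeister moves of Gauss diagrams. *)
Inductive gmove : gcode -> gcode -> Prop :=
| gm_rot (x y : gcode) : gmove (x ++ y) (y ++ x)
| gm_relabel (c : gcode) (f : nat -> nat) : injective f ->
    gmove c [seq (f e.1.1, e.1.2, e.2) | e <- c]
| gm_R1 (x y : gcode) (a : nat) (o s : bool) :
    gmove (x ++ y) (x ++ [:: (a, o, s); (a, ~~ o, s)] ++ y)
| gm_R2 (x y z : gcode) (a b : nat) (o s rv : bool) : a != b ->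
    gmove (x ++ y ++ z)
      (x ++ [:: (a, o, s); (b, o, ~~ s)] ++ y
         ++ (let q := [:: (a, ~~ o, s); (b, ~~ o, ~~ s)] in
             if rv then rev q else q) ++ z)
| gm_R3 (x1 x2 x3 x4 S1 S2 S3 : gcode) (t u v : nat) (oT oM oB h : bool) :
    uniq [:: t; u; v] ->
    (* t = top/middle crossing, u = top/bottom, v = middle/bottom;
       oX = order of the two crossings on strand X; signs as forced by the
       geometry of a triangle of three strands (h = handedness) *)
    let st := (oT == oM) == h in
    let su := (oT == oB) == h in
    let sv := (oM == oB) == h in
    perm_eq [:: S1; S2; S3]
      [:: r3T t u st su oT; r3M t v st sv oM; r3B u v su sv oB] ->
    gmove (x1 ++ S1 ++ x2 ++ S2 ++ x3 ++ S3 ++ x4)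
          (x1 ++ rev S1 ++ x2 ++ rev S2 ++ x3 ++ rev S3 ++ x4).

Definition gequiv : relation gcode :=
  clos_refl_sym_trans gcode (fun a b => gwf a /\ gwf b /\ gmove a b).

Inductive side := SN | SE | SS | SW.

Definition side_eq_dec (a b : side) : {a = b} + {a <> b}.
Proof. decide equality. Defined.

HB.instance Definition _ := hasDecEq.Build side (compareP side_eq_dec).

Inductive tile := T0 | T1 | T2 | T3 | T4 | T5 | T6 | T7 | T8 | T9 | T10.

(* T1: N-W, T2: N-E, T3: S-E, T4: S-W arcs; T5 horizontal; T6 vertical;
   T7: arcs N-W and S-E; T8: arcs N-E and S-W;
   T9, T10: crossing of horizontal and vertical segments, vertical over in T9,
   horizontal over in T10. *)
Definition tile_exit (t : tile) (s : side) : option side :=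
  match t, s with
  | T1, SN => Some SW | T1, SW => Some SN
  | T2, SN => Some SE | T2, SE => Some SN
  | T3, SS => Some SE | T3, SE => Some SS
  | T4, SS => Some SW | T4, SW => Some SS
  | T5, SW => Some SE | T5, SE => Some SW
  | T6, SN => Some SS | T6, SS => Some SN
  | T7, SN => Some SW | T7, SW => Some SN | T7, SS => Some SE | T7, SE => Some SS
  | T8, SN => Some SE | T8, SE => Some SN | T8, SS => Some SW | T8, SW => Some SS
  | (T9 | T10), SN => Some SS | (T9 | T10), SS => Some SN
  | (T9 | T10), SW => Some SE | (T9 | T10), SE => Some SW
  | _, _ => None
  end.

(* Tiles are at positions 0..n-1 from left to right.  The 2(1+n) = 2n+2
   boundary unit edges are indexed by k < 2n+2:
     k < n        : top edge of tile k
     n <= k < 2n  : bottom edge of tile k-n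
     k = 2n       : left edge of tile 0
     k = 2n+1     : right edge of tile n-1.
   The pairing is a fixed-point-free involution of the boundary edges. *)
Record row_mosaic (n : nat) := RowMosaic {
  rm_tile : 'I_n -> tile;
  rm_pair : 'I_(2 * n + 2) -> 'I_(2 * n + 2);
  rm_pair_invol : forall k, rm_pair (rm_pair k) = k;
  rm_pair_fpf : forall k, rm_pair k <> k
}.

Section Mosaic.
Variables (n : nat) (M : row_mosaic n).

Definition tile_at (i : nat) : tile :=
  if insub i is Some j then rm_tile M j else T0.

Definition pairn (k : nat) : nat :=
  if insub k is Some j then val (rm_pair M j) else k.

(* a state (i, s) = "entering tile i through the midpoint of its side s" *)
Definition state := (nat * side)%type.

Definition bnd_index (x : state) : nat :=
  match x.2 with
  | SN => x.1 | SS => n + x.1 | SW => 2 * n | SE => (2 * n).+1 end.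

Definition bnd_edge (k : nat) : state :=
  if k < n then (k, SN) else if k < 2 * n then (k - n, SS)
  else if k == 2 * n then (0, SW) else (n.-1, SE).

(* leaving tile i through side s: where do we enter next? *)
Definition next_enter (i : nat) (s : side) : state :=
  match s with
  | SE => if i.+1 < n then (i.+1, SW) else bnd_edge (pairn (bnd_index (i, s)))
  | SW => if 0 < i then (i.-1, SE) else bnd_edge (pairn (bnd_index (i, s)))
  | _ => bnd_edge (pairn (bnd_index (i, s)))
  end.

Definition has_end (x : state) : bool := isSome (tile_exit (tile_at x.1) x.2).

Definition suitably_connected : Prop :=
  (forall i, i.+1 < n -> has_end (i, SE) = has_end (i.+1, SW)) /\
  (forall k, k < 2 * n + 2 -> has_end (bnd_edge k) = has_end (bnd_edge (pairn k))).

Definition step (x : state) : state :=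
  match tile_exit (tile_at x.1) x.2 with
  | Some s' => next_enter x.1 s'
  | None => x
  end.

Definition valid_state (x : state) : Prop := x.1 < n /\ has_end x.

(* the same strand traversed in the opposite direction *)
Definition rev_state (x : state) : state :=
  (x.1, odflt x.2 (tile_exit (tile_at x.1) x.2)).

(* the orbit of x0 (of period L) is a single closed component which traverses
   every strand of the mosaic: the closure diagram is a knot diagram *)
Definition knot_trace (x0 : state) (L : nat) : Prop :=
  [/\ 0 < L, valid_state x0, iter L step x0 = x0,
      (forall k, 0 < k < L -> iter k step x0 <> x0) &
      (forall y, valid_state y ->
         (exists2 k, k < L & iter k step x0 = y) \/
         (exists2 k, k < L & iter k step x0 = rev_state y))].

Definition visits (x0 : state) (L : nat) (y : state) : bool :=
  has (fun k => iter k step x0 == y) (iota 0 L).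

(* sign of the crossing in tile i, for the orientation given by the trace:
   with direction vectors d_over, d_under, positive iff det(d_over,d_under)>0 *)
Definition crossing_sign (x0 : state) (L : nat) (i : nat) : bool :=
  let east := visits x0 L (i, SW) in
  let north := visits x0 L (i, SS) in
  match tile_at i with
  | T9 => east != north
  | _ => east == north
  end.

Definition is_vertical (s : side) : bool :=
  match s with SN | SS => true | _ => false end.

Definition passage (x0 : state) (L : nat) (x : state) : gcode :=
  match tile_at x.1 with
  | T9 => [:: (x.1, is_vertical x.2, crossing_sign x0 L x.1)]
  | T10 => [:: (x.1, ~~ is_vertical x.2, crossing_sign x0 L x.1)]
  | _ => [::]
  end.

(* Gauss code of the knot diagram, crossings labelled by their tile *)
Definition mosaic_gcode (x0 : state) (L : nat) : gcode :=
  flatten [seq passage x0 L (iter k step x0) | k <- iota 0 L].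

End Mosaic.

Definition represents (n : nat) (M : row_mosaic n) (c : gcode) : Prop :=
  suitably_connected M /\
  exists (x0 : state) (L : nat), knot_trace M x0 L /\ gequiv (mosaic_gcode M x0 L) c.

(* Main.v *)
Require Import Defs.
From mathcomp Require Import all_boot zify.
From Stdlib Require Import Relations.
Set Implicit Arguments. Unset Strict Implicit. Unset Printing Implicit Defensive.

Definition flipE (e : gentry) : gentry := (e.1.1, ~~ e.1.2, e.2).

Section Gwf.
Variable c : gcode.
Hypothesis Hc : gwf c.

Lemma flip_in e : e \in c -> flipE e \in c.
Proof. by move=> /Hc []. Qed.

Lemma count_lab e : e \in c -> count (fun f => glabel f == glabel e) c = 2.
Proof. by move=> /Hc []. Qed.

Lemma KI e e' : e \in c -> e' \in c -> glabel e = glabel e' -> e.1.2 = e'.1.2 -> e = e'.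
Proof.
move=> He He' Hl Ho; apply/eqP; apply/negPn/negP => /negbTE Hne.
have Hf := flip_in He.
have U : uniq [:: e; e'; flipE e].
  rewrite /= !inE Hne /= andbT; apply/andP; split.
    by apply/negP=> /eqP E; move: (congr1 (fun x : gentry => x.1.2) E) => /=; case: (e.1.2).
  by apply/negP=> /eqP E; move: (congr1 (fun x : gentry => x.1.2) E) => /=; rewrite Ho; case: (e'.1.2).
have Hsub : {subset [:: e; e'; flipE e] <= filter (fun f => glabel f == glabel e) c}.
  move=> x; rewrite !inE => /or3P [] /eqP ->; rewrite mem_filter ?He ?He' ?Hf andbT; apply/eqP => //.
have := uniq_leq_size U Hsub; rewrite size_filter count_lab //.
Qed.

Lemma c_uniq : uniq c.
Proof.
apply: count_mem_uniq => x; case Hx: (x \in c); last first.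
  by apply/eqP; rewrite -leqn0 leqNgt -has_count has_pred1 Hx.
have Hf := flip_in Hx.
have H1 : count (pred1 x) c + count (pred1 (flipE x)) c <= 2.
  rewrite -count_predUI.
  have -> : count (predI (pred1 x) (pred1 (flipE x))) c = 0.
    apply/eqP; rewrite -leqn0 leqNgt -has_count; apply/hasPn => y _ /=.
    apply/negP => /andP [/eqP -> /eqP E].
    by move: (congr1 (fun x : gentry => x.1.2) E) => /=; case: (x.1.2).
  rewrite addn0 -(count_lab Hx); apply: sub_count => y /= /orP [] /eqP -> //.
have H2 : 0 < count (pred1 (flipE x)) c by rewrite -has_count has_pred1.
apply/eqP; rewrite eqn_leq; apply/andP; split; first by lia.
by rewrite -has_count has_pred1.
Qed.

Lemma vert_ex a : a \in map glabel c -> exists s, (a, true, s) \in c /\ (a, false, s) \in c.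
Proof.
case/mapP => [[[b o] s]] He ->; exists s; have Hf := flip_in He; rewrite /flipE /= in Hf.
by case: o He Hf => He Hf; split.
Qed.

End Gwf.

Section Generic.
Variables (T E : Type) (R : rel T) (h : E -> T) (t : E -> seq T).
Let blk e := h e :: t e.
Let Q e e' := R (last (h e) (t e)) (h e') && path R (h e') (t e').

Lemma G1 x s : path Q x s -> path R (last (h x) (t x)) (flatten (map blk s)).
Proof.
elim: s x => [|y s IH] x //= /andP [/andP [H1 H2] H3].
rewrite cat_path /= H1 H2 /=; exact: IH.
Qed.

Lemma G2 x s : cycle Q (x :: s) -> cycle R (flatten (map blk (x :: s))).
Proof.
move=> /= /G1; rewrite -cats1 map_cat flatten_cat /= cats0 cat_path /= => /and3P [H1 H2 H3].
rewrite /blk /= rcons_cat cat_path H3 /= rcons_path H1 H2 //.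
Qed.
End Generic.

Lemma G3 (S T : eqType) (g : S -> seq T) (s : seq S) :
  uniq s -> {in s, forall e, uniq (g e)} ->
  {in s &, forall e e' y, y \in g e -> y \in g e' -> e = e'} ->
  uniq (flatten (map g s)).
Proof.
elim: s => [|e s IH] //= /andP [Hn Hu] Hg Hd.
rewrite cat_uniq Hg ?mem_head //= IH //; last first.
- by move=> x y Hx Hy; apply: Hd; rewrite inE ?Hx ?Hy orbT.
- by move=> x Hx; apply: Hg; rewrite inE Hx orbT.
rewrite andbT; apply/hasPn => y /flatten_mapP [e' He' Hy]; apply/negP => Hy'.
have He2 : e' \in e :: s by rewrite inE He' orbT.
have E := Hd e e' (mem_head _ _) He2 y Hy' Hy.
by move: Hn; rewrite E He'.
Qed.

Lemma flatten_map_flatten (S T U : Type) (g : T -> seq U) (b : S -> seq T) (s : seq S) :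
  flatten (map g (flatten (map b s))) = flatten (map (fun e => flatten (map g (b e))) s).
Proof. by elim: s => //= e s IH; rewrite map_cat flatten_cat IH. Qed.

Lemma flatten_map1 (S T : Type) (g : S -> T) (s : seq S) :
  flatten (map (fun e => [:: g e]) s) = map g s.
Proof. by elim: s => //= e s ->. Qed.

Lemma d0 a : (3 * a) %/ 3 = a. Proof. lia. Qed.
Lemma m0 a : (3 * a) %% 3 = 0. Proof. lia. Qed.
Lemma d1 a : (3 * a).+1 %/ 3 = a. Proof. lia. Qed.
Lemma m1 a : (3 * a).+1 %% 3 = 1. Proof. lia. Qed.
Lemma d2 a : (3 * a).+2 %/ 3 = a. Proof. lia. Qed.
Lemma m2 a : (3 * a).+2 %% 3 = 2. Proof. lia. Qed.
Lemma addKn' m k : m + k - m = k. Proof. lia. Qed.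


Section Cons.
Variables (e0 : gentry) (c0 : gcode).
Local Notation c := (e0 :: c0).
Hypothesis Hc : gwf c.

Definition NN := (\max_(e <- c) glabel e).+1.
Definition nn := 3 * NN.
Definition lab a := a \in map glabel c.
Arguments nn : simpl never.
Arguments NN : simpl never.

Lemma lab_lt a : lab a -> a < NN.
Proof. by case/mapP => e He ->; rewrite ltnS; apply: (leq_bigmax_seq _ He). Qed.

Lemma lab_in e : e \in c -> lab e.1.1.
Proof. by move=> He; apply: (map_f glabel He). Qed.

Lemma NN_gt0 : 0 < NN. Proof. by []. Qed.

Definition tl (i : nat) : tile :=
  if lab (i %/ 3) then nth T0 [:: T3; T9; T4] (i %% 3) else T0.

Definition hdS (e : gentry) : state :=
  if e.1.2 then ((3 * e.1.1).+1, if e.2 then SN else SS) else (3 * e.1.1, SS).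
Definition tlS (e : gentry) : seq state :=
  if e.1.2 then [::] else [:: ((3 * e.1.1).+1, SW); ((3 * e.1.1).+2, SW)].
Definition blk e := hdS e :: tlS e.
Definition ein (e : gentry) : nat :=
  if e.1.2 then (if e.2 then (3 * e.1.1).+1 else nn + (3 * e.1.1).+1) else nn + 3 * e.1.1.
Definition eout (e : gentry) : nat :=
  if e.1.2 then (if e.2 then nn + (3 * e.1.1).+1 else (3 * e.1.1).+1) else nn + (3 * e.1.1).+2.

Definition usedc k := ((k < nn) && (k %% 3 == 1) && lab (k %/ 3)) ||
                      ((nn <= k) && (k < 2 * nn) && lab ((k - nn) %/ 3)).
Definition up k :=
  if k == 2 * nn then (2 * nn).+1 else if k == (2 * nn).+1 then 2 * nn else
  if k < nn then (if lab (k %/ 3) then (if k %% 3 == 0 then k + 2 else k - 2) else nn + k)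
  else k - nn.
Definition partner k :=
  if has (fun e => eout e == k) c then ein (next c (nth e0 c (find (fun e => eout e == k) c)))
  else eout (prev c (nth e0 c (find (fun e => ein e == k) c))).
Definition pr k := if usedc k then partner k else up k.

Lemma cU : uniq c. Proof. exact: c_uniq Hc. Qed.

Lemma ein_used e : e \in c -> usedc (ein e).
Proof.
move=> He; have := lab_in He; have := lab_lt (lab_in He).
case: e He => [[a o] s] _ /= Ha Hl; rewrite /usedc /ein /=.
case: o; case: s => /=; rewrite ?addKn' ?d0 ?d1 ?d2 ?m0 ?m1 ?m2 Hl /nn ?andbT ?orbT; apply/orP; lia.
Qed.

Lemma eout_used e : e \in c -> usedc (eout e).
Proof.
move=> He; have := lab_in He; have := lab_lt (lab_in He).
case: e He => [[a o] s] _ /= Ha Hl; rewrite /usedc /eout /=.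
case: o; case: s => /=; rewrite ?addKn' ?d0 ?d1 ?d2 ?m0 ?m1 ?m2 Hl /nn ?andbT ?orbT; apply/orP; lia.
Qed.

Ltac solve3 := first [split; [lia|done|done] | split; [lia|done] | exfalso; lia].

Lemma ein_inj e e' : e \in c -> e' \in c -> ein e = ein e' -> e = e'.
Proof.
move=> He He' E; have Ha := lab_lt (lab_in He); have Ha' := lab_lt (lab_in He').
have [E1 E2] : e.1.1 = e'.1.1 /\ e.1.2 = e'.1.2.
  move: E Ha Ha'; rewrite /ein /nn; case: e He => [[a o] s] _; case: e' He' => [[a' o'] s'] _ /=.
  by case: o; case: s; case: o'; case: s' => /= E Ha Ha'; solve3.
exact: (KI Hc He He' E1 E2).
Qed.

Lemma eout_inj e e' : e \in c -> e' \in c -> eout e = eout e' -> e = e'.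
Proof.
move=> He He' E; have Ha := lab_lt (lab_in He); have Ha' := lab_lt (lab_in He').
have [E1 E2] : e.1.1 = e'.1.1 /\ e.1.2 = e'.1.2.
  move: E Ha Ha'; rewrite /eout /nn; case: e He => [[a o] s] _; case: e' He' => [[a' o'] s'] _ /=.
  by case: o; case: s; case: o'; case: s' => /= E Ha Ha'; solve3.
exact: (KI Hc He He' E1 E2).
Qed.

Lemma ein_eout e e' : e \in c -> e' \in c -> ein e != eout e'.
Proof.
move=> He He'; apply/negP => /eqP E; have Ha := lab_lt (lab_in He); have Ha' := lab_lt (lab_in He').
have [E1 E2 E3] : [/\ e.1.1 = e'.1.1, e.1.2 = e'.1.2 & e.2 = ~~ e'.2].
  move: E Ha Ha'; rewrite /ein /eout /nn; case: e He => [[a o] s] _; case: e' He' => [[a' o'] s'] _ /=.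
  by case: o; case: s; case: o'; case: s' => /= E Ha Ha'; solve3.
have E4 := KI Hc He He' E1 E2; rewrite E4 in E3; by case: (e'.2) E3.
Qed.

Lemma used_ex k : usedc k ->
  (exists2 e, e \in c & eout e = k) \/ (exists2 e, e \in c & ein e = k).
Proof.
rewrite /usedc => /orP [/andP [/andP [Hk Hm] Hl] | /andP [/andP [Hk1 Hk2] Hl]].
- case: (vert_ex Hc Hl) => s [Hv Hh]; case: s Hv Hh => Hv Hh.
  + by right; exists (k %/ 3, true, true) => //; rewrite /ein /=; lia.
  + by left; exists (k %/ 3, true, false) => //; rewrite /eout /=; lia.
- case: (vert_ex Hc Hl) => s [Hv Hh].
  have : (k - nn) %% 3 < 3 by lia.
  case Er: ((k - nn) %% 3) => [|[|[|r]]] // _.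
  + by right; exists ((k - nn) %/ 3, false, s) => //; rewrite /ein /=; lia.
  + case: s Hv Hh => Hv Hh.
    * by left; exists ((k - nn) %/ 3, true, true) => //; rewrite /eout /=; lia.
    * by right; exists ((k - nn) %/ 3, true, false) => //; rewrite /ein /=; lia.
  + by left; exists ((k - nn) %/ 3, false, s) => //; rewrite /eout /=; lia.
Qed.

Lemma find_out e : e \in c -> nth e0 c (find (fun f => eout f == eout e) c) = e.
Proof.
move=> He; have Hh : has (fun f => eout f == eout e) c by apply/hasP; exists e.
have /eqP E := nth_find e0 Hh; apply: eout_inj => //; apply: mem_nth; by rewrite -has_find.
Qed.

Lemma find_in e : e \in c -> nth e0 c (find (fun f => ein f == ein e) c) = e.
Proof.
move=> He; have Hh : has (fun f => ein f == ein e) c by apply/hasP; exists e.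
have /eqP E := nth_find e0 Hh; apply: ein_inj => //; apply: mem_nth; by rewrite -has_find.
Qed.

Lemma pr_out e : e \in c -> pr (eout e) = ein (next c e).
Proof.
move=> He; rewrite /pr eout_used // /partner.
have -> : has (fun f => eout f == eout e) c by apply/hasP; exists e.
by rewrite find_out.
Qed.

Lemma pr_in e : e \in c -> pr (ein e) = eout (prev c e).
Proof.
move=> He; rewrite /pr ein_used // /partner.
have -> : has (fun f => eout f == ein e) c = false.
  apply/negbTE/hasPn => f Hf; rewrite eq_sym; exact: ein_eout.
by rewrite find_in.
Qed.

Lemma pr_used k : usedc k -> [/\ usedc (pr k), pr (pr k) = k & pr k != k].
Proof.
case/used_ex => [[e He <-] | [e He <-]].
- have Hn : next c e \in c by rewrite mem_next.
  rewrite pr_out // pr_in // prev_next ?cU //; split => //; first exact: ein_used.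
  exact: ein_eout.
- have Hp : prev c e \in c by rewrite mem_prev.
  rewrite pr_in // pr_out // next_prev ?cU //; split => //; first exact: eout_used.
  rewrite eq_sym; exact: ein_eout.
Qed.

Lemma usedc_lt k : usedc k -> k < 2 * nn.
Proof. by rewrite /usedc => /orP [/andP [/andP [H _] _]|/andP [/andP [_ H] _]]; lia. Qed.

Lemma up_unused k : k < (2 * nn).+2 -> ~~ usedc k ->
  [/\ ~~ usedc (up k), up (up k) = k, up k != k & up k < (2 * nn).+2].
Proof.
move=> Hk Hu.
have NN0 := NN_gt0. have Enn : nn = 3 * NN by [].
have U0 : forall j, 2 * nn <= j -> usedc j = false.
  move=> j Hj; rewrite /usedc (_ : (j < nn) = false); last by lia.
  by rewrite (_ : (j < 2 * nn) = false) ?andbF //; lia.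
case: (ltnP k nn) => H1.
- move: Hu; rewrite /usedc H1 /=.
  have Hr : k %% 3 < 3 by lia.
  case Hl: (lab (k %/ 3)) => /=; rewrite ?andbT ?andbF /= => Hu.
  + have E1 : (k %% 3 == 1) = false by move: Hu; case: (k %% 3 == 1).
    move: Hu; rewrite E1 /= => Hu.
    case: (eqVneq (k %% 3) 0) => Hm.
    * have X : up k = k + 2 by rewrite /up Hl Hm /=; do 2 (rewrite ifF; last by apply/negbTE; apply/eqP; lia); rewrite H1.
      have Y : up (k + 2) = k.
        rewrite /up (_ : (k + 2) %/ 3 = k %/ 3); last by lia.
        rewrite Hl; do 2 (rewrite ifF; last by apply/negbTE; apply/eqP; lia).
        by rewrite ifT ?ifF; [lia | apply/negbTE; lia | lia].
      rewrite X Y; split => //; last lia; last by apply/eqP; lia.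
      rewrite /usedc negb_or; apply/andP; split; apply/negP; lia.
    * have X : up k = k - 2.
        rewrite /up Hl; do 2 (rewrite ifF; last by apply/negbTE; apply/eqP; lia).
        by rewrite H1 (negbTE Hm).
      have Y : up (k - 2) = k.
        rewrite /up (_ : (k - 2) %/ 3 = k %/ 3); last by lia.
        rewrite Hl; do 2 (rewrite ifF; last by apply/negbTE; apply/eqP; lia).
        by rewrite ifT ?ifT; [lia | lia | lia].
      rewrite X Y; split => //; last lia; last by apply/eqP; lia.
      rewrite /usedc negb_or; apply/andP; split; apply/negP; lia.
  + have X : up k = nn + k.
      rewrite /up Hl; do 2 (rewrite ifF; last by apply/negbTE; apply/eqP; lia).
      by rewrite H1.
    have Y : up (nn + k) = k.
      rewrite /up; do 2 (rewrite ifF; last by apply/negbTE; apply/eqP; lia).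
      by rewrite ifF; [lia | apply/negbTE; lia].
    rewrite X Y; split => //; last lia; last by apply/eqP; lia.
    rewrite /usedc (_ : (nn + k - nn) = k); last by lia.
    rewrite Hl andbF orbF; apply/negP; lia.
- case: (ltnP k (2 * nn)) => H2.
  + move: Hu; rewrite /usedc (_ : (k < nn) = false); last by lia.
    rewrite /= H1 H2 /= => /negbTE Hl.
    have X : up k = k - nn.
      rewrite /up; do 2 (rewrite ifF; last by apply/negbTE; apply/eqP; lia).
      by rewrite ifF //; apply/negbTE; lia.
    have Y : up (k - nn) = k.
      rewrite /up; do 2 (rewrite ifF; last by apply/negbTE; apply/eqP; lia).
      rewrite ifT; last lia. rewrite Hl; lia.
    rewrite X Y; split => //; last lia; last by apply/eqP; lia.
    rewrite /usedc Hl andbF /= negb_and; apply/orP; left; apply/negP; lia.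
  + have [E|E] : k = 2 * nn \/ k = (2 * nn).+1 by lia.
    * have X : up (2 * nn) = (2 * nn).+1 by rewrite /up eqxx.
      have Y : up (2 * nn).+1 = 2 * nn.
        by rewrite /up ifF ?eqxx //; apply/negbTE/eqP; lia.
      rewrite E X Y; split => //; last by apply/eqP; lia.
      by rewrite U0 //; lia.
    * have X : up (2 * nn) = (2 * nn).+1 by rewrite /up eqxx.
      have Y : up (2 * nn).+1 = 2 * nn.
        by rewrite /up ifF ?eqxx //; apply/negbTE/eqP; lia.
      rewrite E Y X; split => //; last by apply/eqP; lia.
      by rewrite U0 //; lia.
Qed.

Lemma pr_lt k : k < 2 * nn + 2 -> pr k < 2 * nn + 2.
Proof.
rewrite addn2 /pr => Hk; case Hu: (usedc k).
- by case: (pr_used Hu) => H _ _; have := usedc_lt H; rewrite /pr Hu; lia.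
- by case: (up_unused Hk (negbT Hu)).
Qed.

Lemma pr_invol k : k < 2 * nn + 2 -> pr (pr k) = k.
Proof.
rewrite addn2 => Hk; case Hu: (usedc k).
- by case: (pr_used Hu).
- case: (up_unused Hk (negbT Hu)) => H1 H2 _ _.
  by rewrite /pr Hu (negbTE H1).
Qed.

Lemma pr_fpf k : k < 2 * nn + 2 -> pr k != k.
Proof.
rewrite addn2 => Hk; case Hu: (usedc k).
- by case: (pr_used Hu).
- by case: (up_unused Hk (negbT Hu)) => _ _ H _; rewrite /pr Hu.
Qed.

Lemma usedc_pr k : k < 2 * nn + 2 -> usedc (pr k) = usedc k.
Proof.
rewrite addn2 => Hk; case Hu: (usedc k).
- by case: (pr_used Hu).
- by case: (up_unused Hk (negbT Hu)) => H _ _ _; rewrite /pr Hu (negbTE H).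
Qed.

Definition rmp (k : 'I_(2 * nn + 2)) : 'I_(2 * nn + 2) := Ordinal (pr_lt (ltn_ord k)).

Lemma rmp_invol k : rmp (rmp k) = k.
Proof. apply: val_inj => /=; exact: pr_invol (ltn_ord k). Qed.

Lemma rmp_fpf k : rmp k <> k.
Proof. move/(congr1 val) => /= /eqP; apply/negP; exact: pr_fpf (ltn_ord k). Qed.

Definition MM : row_mosaic nn := @RowMosaic nn (fun j => tl j) rmp rmp_invol rmp_fpf.

Lemma tileE i : tile_at MM i = if i < nn then tl i else T0.
Proof.
rewrite /tile_at; case: insubP => [j Hi Hj | /negbTE Hi]; last by rewrite Hi.
by rewrite Hi /= Hj.
Qed.

Lemma pairnE k : k < 2 * nn + 2 -> pairn MM k = pr k.
Proof.
move=> Hk; rewrite /pairn; case: insubP => [j Hi Hj | /negP //].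
by rewrite /= -Hj.
Qed.

Lemma tl3 a : lab a -> tl (3 * a) = T3. Proof. by move=> H; rewrite /tl d0 m0 H. Qed.
Lemma tl9 a : lab a -> tl (3 * a).+1 = T9. Proof. by move=> H; rewrite /tl d1 m1 H. Qed.
Lemma tl4 a : lab a -> tl (3 * a).+2 = T4. Proof. by move=> H; rewrite /tl d2 m2 H. Qed.

Lemma has_end_bnd k : k < 2 * nn + 2 -> has_end MM (bnd_edge nn k) = usedc k.
Proof.
move=> Hk; have NN0 := NN_gt0; have Enn : nn = 3 * NN by [].
rewrite /bnd_edge /has_end.
case: (ltnP k nn) => H1.
- rewrite tileE H1 /tl /usedc H1 /= (_ : nn <= k = false) ?andbF ?orbF; last by lia.
  have : k %% 3 < 3 by lia.
  by case: (lab (k %/ 3)); rewrite ?andbF //; case: (k %% 3) => [|[|[|r]]].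
case: (ltnP k (2 * nn)) => H2.
- rewrite tileE (_ : k - nn < nn); last by lia.
  rewrite /tl /usedc (_ : k < nn = false) ?H1 ?H2 /=; last by lia.
  have : (k - nn) %% 3 < 3 by lia.
  by case: (lab ((k - nn) %/ 3)); case: ((k - nn) %% 3) => [|[|[|r]]].
have U : usedc k = false.
  rewrite /usedc (_ : (k < nn) = false); last by lia.
  by rewrite (_ : (k < 2 * nn) = false) ?andbF //; lia.
rewrite U; case: ifP => _.
- rewrite tileE (_ : 0 < nn); last by lia.
  by rewrite /tl; case: (lab _).
- rewrite tileE (_ : nn.-1 < nn); last by lia.
  rewrite /tl (_ : nn.-1 %% 3 = 2); last by lia.
  by case: (lab _).
Qed.

Lemma bnd_ein e : e \in c -> bnd_edge nn (ein e) = hdS e.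
Proof.
move=> He; have Ha := lab_lt (lab_in He); have Enn : nn = 3 * NN by [].
rewrite /bnd_edge /ein /hdS; case: e He Ha => [[a o] s] _ /= Ha.
case: o; case: s => /=.
- by rewrite ifT //; lia.
- rewrite ifF; last by lia. rewrite ifT; last by lia. by rewrite addKn'.
- rewrite ifF; last by lia. rewrite ifT; last by lia. by rewrite addKn'.
- rewrite ifF; last by lia. rewrite ifT; last by lia. by rewrite addKn'.
Qed.

Lemma step_tl e : e \in c -> path (frel (step MM)) (hdS e) (tlS e).
Proof.
move=> He; have Hl := lab_in He; have Ha := lab_lt Hl; have Enn : nn = 3 * NN by [].
rewrite /hdS /tlS; case: e He Hl Ha => [[a o] s] _ /= Hl Ha.
case: o => //=.
rewrite /step /= !tileE ifT; last by lia.
rewrite ifT; last by lia.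
rewrite tl3 // tl9 //= /next_enter ifT; last by lia.
rewrite ifT; last by lia.
by rewrite !eqxx.
Qed.

Lemma step_last e : e \in c -> step MM (last (hdS e) (tlS e)) = hdS (next c e).
Proof.
move=> He; have Hl := lab_in He; have Ha := lab_lt Hl; have Enn : nn = 3 * NN by [].
have Hn : next c e \in c by rewrite mem_next.
rewrite -(bnd_ein Hn) -pr_out //; clear Hn.
have Hlt : eout e < 2 * nn + 2 by have := usedc_lt (eout_used He); lia.
rewrite -pairnE //.
rewrite /hdS /tlS /eout; case: e He Hl Ha Hlt => [[a o] s] _ /= Hl Ha Hlt.
move: Hlt; case: o; case: s => /= Hlt; rewrite /step /= tileE ifT; try lia.
- by rewrite tl9.
- by rewrite tl9.
- by rewrite tl4.
- by rewrite tl4.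
Qed.

Definition orb := flatten (map blk c).
Definition x0 := hdS e0.
Definition LL := size orb.

Lemma orb_cycle : fcycle (step MM) orb.
Proof.
have HQ : cycle (fun e e' => (frel (step MM)) (last (hdS e) (tlS e)) (hdS e') &&
                             path (frel (step MM)) (hdS e') (tlS e')) c.
  apply: (@sub_in_cycle _ (mem c) _ _ _ _ _ (cycle_next cU)).
  - move=> x y Hx Hy /eqP <-; have Hn : next c x \in c by rewrite mem_next.
    apply/andP; split; [apply/eqP; exact: step_last | exact: step_tl].
  - by apply/allP.
exact: (G2 HQ).
Qed.

Lemma orb_traj : orb = traject (step MM) x0 LL /\ iter LL (step MM) x0 = x0.
Proof.
have := orb_cycle; rewrite /LL /orb /= -/x0.
set p := tlS e0 ++ _ => H.
have := fpathE H; rewrite size_rcons trajectSr => /eqP; rewrite eqseq_rcons => /andP [/eqP Ep /eqP Ex].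
by split; [rewrite -Ep | rewrite -iterS iterSr -Ex].
Qed.

Definition key (y : state) := (y.1 %/ 3, (y.1 %% 3 == 1) && is_vertical y.2).

Lemma key_blk e y : y \in blk e -> key y = (e.1.1, e.1.2).
Proof.
case: e => [[a o] s]; rewrite /blk /hdS /tlS /=.
case: o; case: s; rewrite /= !inE ?orbF => /=.
- by move=> /eqP -> ; rewrite /key /= d1 m1.
- by move=> /eqP -> ; rewrite /key /= d1 m1.
- by move=> /or3P [] /eqP -> ; rewrite /key /= ?d0 ?m0 ?d1 ?m1 ?d2 ?m2.
- by move=> /or3P [] /eqP -> ; rewrite /key /= ?d0 ?m0 ?d1 ?m1 ?d2 ?m2.
Qed.

Lemma orb_uniq : uniq orb.
Proof.
apply: G3; first exact: cU.
- move=> [[a o] s] _; rewrite /blk /hdS /tlS; case: o => //=.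
  rewrite !inE andbT; apply/andP; split; first (apply/norP; split).
  + by apply/negP => /eqP [] ; lia.
  + by apply/negP => /eqP [] ; lia.
  + by apply/negP => /eqP [] ; lia.
- move=> e e' He He' y Hy Hy'.
  have := key_blk Hy; rewrite (key_blk Hy') => -[E1 E2].
  exact: (KI Hc He He' (esym E1) (esym E2)).
Qed.

Lemma iterE k : k < LL -> iter k (step MM) x0 = nth x0 orb k.
Proof. by move=> Hk; rewrite (proj1 orb_traj) nth_traject. Qed.

Lemma visitsE y : visits MM x0 LL y = (y \in orb).
Proof.
rewrite /visits; apply/hasP/idP => [[k Hk /eqP <-]|Hy].
- by move: Hk; rewrite mem_iota add0n => /andP [_ Hk]; rewrite iterE // mem_nth.
- have Hi : index y orb < LL by rewrite index_mem.
  by exists (index y orb); rewrite ?mem_iota ?add0n ?Hi // iterE // nth_index.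
Qed.

Lemma in_orb e y : e \in c -> y \in blk e -> y \in orb.
Proof. by move=> He Hy; apply/flatten_mapP; exists e. Qed.

Lemma both e : e \in c -> (e.1.1, true, e.2) \in c /\ (e.1.1, false, e.2) \in c.
Proof.
move=> He; have := flip_in Hc He; case: e He => [[a o] s] He /=; rewrite /flipE /=.
by case: o He => He Hf.
Qed.

Lemma csE e : e \in c -> crossing_sign MM x0 LL (3 * e.1.1).+1 = e.2.
Proof.
move=> He; have [Hv Hh] := both He; have Hl := lab_in He; have Ha := lab_lt Hl.
have Enn : nn = 3 * NN by [].
rewrite /crossing_sign tileE ifT; last by lia.
rewrite tl9 // !visitsE.
have -> : ((3 * e.1.1).+1, SW) \in orb by apply: (in_orb Hh); rewrite /blk /= !inE eqxx orbT.
case: e He Hv Hh Hl Ha => [[a o] s] He /= Hv Hh Hl Ha.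
case: s He Hv Hh => He Hv Hh.
- case Hin: (_ \in orb) => //.
  case/flatten_mapP: Hin => e' He' Hy.
  have [E1 E2] := key_blk Hy.
  rewrite d1 m1 /= in E1 E2.
  have E := KI Hc He' Hv (esym E1) (esym E2).
  by move: Hy; rewrite E /blk /hdS /tlS /= inE xpair_eqE andbC.
- by rewrite (in_orb Hv) //= inE.
Qed.

Lemma gcodeE : mosaic_gcode MM x0 LL = map (fun e => ((3 * e.1.1).+1, e.1.2, e.2)) c.
Proof.
rewrite /mosaic_gcode.
have -> : [seq passage MM x0 LL (iter k (step MM) x0) | k <- iota 0 LL] =
          map (passage MM x0 LL) orb.
  rewrite -[in RHS](take_size orb) -(map_nth_iota0 x0) // -map_comp -/LL.
  apply/eq_in_map => k; rewrite mem_iota add0n => /andP [_ Hk]; rewrite /= iterE //.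
rewrite /orb flatten_map_flatten -(flatten_map1 (fun e : gentry => ((3 * e.1.1).+1, e.1.2, e.2))); congr flatten.
apply/eq_in_map => e He; have Hcs := csE He; have Hl := lab_in He; have Ha := lab_lt Hl.
have Enn : nn = 3 * NN by [].
case: e He Hcs Hl Ha => [[a o] s] He /= Hcs Hl Ha.
rewrite /blk /hdS /tlS; case: o He Hcs => He Hcs /=.
- rewrite /passage /= tileE ifT; last by lia.
  by rewrite tl9 // Hcs; case: s He Hcs.
- rewrite /passage /= !tileE ifT; last by lia.
  rewrite ifT; last by lia.
  rewrite ifT; last by lia.
  by rewrite tl3 // tl9 // tl4 // Hcs.
Qed.

Lemma cover y : valid_state MM y -> y \in orb \/ rev_state MM y \in orb.
Proof.
case: y => i sd; rewrite /valid_state /has_end /rev_state /= => -[Hi].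
have Enn : nn = 3 * NN by [].
rewrite tileE Hi /tl.
case Hl: (lab (i %/ 3)); last by case: sd.
have [s [Hv Hh]] := vert_ex Hc Hl.
have Hr : i %% 3 < 3 by lia.
move Ea : (i %/ 3) Hl Hv Hh => a Hl Hv Hh.
move Er : (i %% 3) Hr => r Hr.
have Ei : i = 3 * a + r by lia.
case: r Er Hr Ei => [|[|[|r]]] Er Hr Ei //=.
- rewrite (_ : i = 3 * a); last by lia.
  case: sd => //= _.
  + by right; apply: (in_orb Hh); rewrite /blk /hdS /= mem_head.
  + by left; apply: (in_orb Hh); rewrite /blk /hdS /= mem_head.
- rewrite (_ : i = (3 * a).+1); last by lia.
  have HV : ((3 * a).+1, if s then SN else SS) \in orb.
    by apply: (in_orb Hv); rewrite /blk /hdS /= mem_head.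
  have HH : ((3 * a).+1, SW) \in orb.
    by apply: (in_orb Hh); rewrite /blk /hdS /tlS /= !inE eqxx orbT.
  by case: sd => /= _; case: s Hv Hh HV => Hv Hh HV; by [left | right].
- rewrite (_ : i = (3 * a).+2); last by lia.
  have HH : ((3 * a).+2, SW) \in orb.
    by apply: (in_orb Hh); rewrite /blk /hdS /tlS /= !inE eqxx !orbT.
  by case: sd => //= _; [right | left].
Qed.

Lemma sc : suitably_connected MM.
Proof.
have Enn : nn = 3 * NN by [].
split.
- move=> i Hi; rewrite /has_end /= !tileE ifT; last by lia.
  rewrite ifT // /tl.
  have : i %% 3 < 3 by lia.
  case Er: (i %% 3) => [|[|[|r]]] // _.
  + rewrite (_ : i.+1 %/ 3 = i %/ 3); last by lia.
    rewrite (_ : i.+1 %% 3 = 1); last by lia.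
    by case: (lab _).
  + rewrite (_ : i.+1 %/ 3 = i %/ 3); last by lia.
    rewrite (_ : i.+1 %% 3 = 2); last by lia.
    by case: (lab _).
  + rewrite (_ : i.+1 %% 3 = 0); last by lia.
    by case: (lab _); case: (lab _).
- move=> k Hk; rewrite pairnE // !has_end_bnd ?usedc_pr //.
  exact: pr_lt.
Qed.

Lemma kt : knot_trace MM x0 LL.
Proof.
have Enn : nn = 3 * NN by [].
have Hu := orb_uniq.
have He0 : e0 \in c by rewrite mem_head.
split.
- by rewrite /LL /orb /= /blk.
- split.
  + rewrite /x0 /hdS; have := lab_lt (lab_in He0); case: (e0.1.2) => /=; lia.
  + by rewrite /x0 -bnd_ein // has_end_bnd ?ein_used //; have := usedc_lt (ein_used He0); lia.
- exact: (proj2 orb_traj).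
- move=> k /andP [Hk0 Hk]; rewrite iterE // => E.
  have H0 : 0 < LL by lia.
  have := nth_uniq x0 Hk H0 Hu; rewrite E (_ : nth x0 orb 0 = x0) // eqxx => /esym /eqP; lia.
- move=> y /cover [Hy|Hy].
  + by left; exists (index y orb); rewrite ?index_mem // iterE ?index_mem // nth_index.
  + by right; exists (index (rev_state MM y) orb); rewrite ?index_mem // iterE ?index_mem // nth_index.
Qed.

Lemma mainCons : exists (n : nat) (M : row_mosaic n), 0 < n /\
  represents M (map (fun e => ((3 * e.1.1).+1, e.1.2, e.2)) c).
Proof.
exists nn, MM; split; first by rewrite /nn muln_gt0 NN_gt0.
split; first exact: sc.
exists x0, LL; split; first exact: kt.
rewrite gcodeE; exact: rst_refl.
Qed.

End Cons.

Lemma gwf_relabel c (f : nat -> nat) : injective f -> gwf c ->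
  gwf [seq (f e.1.1, e.1.2, e.2) | e <- c].
Proof.
move=> Hf Hc e' /mapP [e He ->]; split.
- rewrite count_map -(proj1 (Hc e He)); apply: eq_count => x /=.
  by rewrite /glabel /=; apply/eqP/eqP => [/Hf|->].
- by apply/mapP; exists (flipE e); [exact: flip_in | by []].
Qed.

Lemma repr_ne e0 c0 : gwf (e0 :: c0) ->
  exists (n : nat) (M : row_mosaic n), 0 < n /\ represents M (e0 :: c0).
Proof.
move=> Hc; case: (mainCons Hc) => n [M [Hn [Hs [x [L [Hk Hg]]]]]].
exists n, M; split => //; split => //; exists x, L; split => //.
eapply rst_trans; first exact: Hg. apply: rst_sym; apply: rst_step; split => //; split.
- apply: (@gwf_relabel _ (fun a => (3 * a).+1)) => // a b [] ; lia.
- have Hi : injective (fun a => (3 * a).+1) by move=> a b [] ; lia.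
  exact: (gm_relabel (e0 :: c0) Hi).
Qed.

Theorem mainTheorem2 :
  forall c : gcode, gwf c ->
  exists (n : nat) (M : row_mosaic n), 0 < n /\ represents M c.
Proof.
case => [_|e0 c0 Hc]; last exact: repr_ne.
pose c' : gcode := [:: (0, true, true); (0, false, true)].
have Hc' : gwf c'.
  by move=> e; rewrite !inE => /orP [] /eqP ->; split.
case: (repr_ne Hc') => n [M [Hn [Hs [x [L [Hk Hg]]]]]].
exists n, M; split => //; split => //; exists x, L; split => //.
eapply rst_trans; first exact: Hg. apply: rst_sym; apply: rst_step; split; first by move=> e.
split => //.
exact: (gm_R1 [::] [::] 0 true true).
Qed.
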